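(* Let $p$ be a prime and let $\mathbb{C}_p$ be the field of complex $p$-adic numbers with $p$-adic norm $|\cdot|_p$. Let $a,b,c\in\mathbb{C}_p$ with $b\neq 0$ and $c\neq ab$, and let $f(x)=\frac{x+a}{bx+c}$ for $x\in\mathbb{C}_p$, $x\neq \hat x:=-c/b$. Fix a square root $\sqrt{(c-1)^2+4ab}\in\mathbb{C}_p$ and let $$x_1=\frac{1-c+\sqrt{(c-1)^2+4ab}}{2b},\qquad x_2=\frac{1-c-\sqrt{(c-1)^2+4ab}}{2b}$$ be the fixed points of $f$. Assume $$|f'(x_i)|_p=\left|\frac{c-ab}{(bx_i+c)^2}\right|_p=1\quad (i=1,2)$$ and $$\left|\frac{b}{\sqrt{c-ab}}\right|_p<1 .$$ Put $\varepsilon_c=\left|\frac{\sqrt{c-ab}}{b}\right|_p-1$. Then for $i=1,2$ the maximum Siegel disk of $f$ centered at $x_i$ is $$SI(x_i)=V_{1+\varepsilon_c}(x_i).$$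
   Context: For $x_0\in\mathbb{C}_p$ and $r>0$: $U_r(x_0)=\{x\in\mathbb{C}_p:|x-x_0|_p\le r\}$, $V_r(x_0)=\{x\in\mathbb{C}_p:|x-x_0|_p<r\}$, $S_r(x_0)=\{x\in\mathbb{C}_p:|x-x_0|_p=r\}$. The value $|\sqrt{c-ab}|_p=|c-ab|_p^{1/2}$ does not depend on the choice of square root. For a fixed point $x_0$ of $f$, a ball $V_r(x_0)$ (contained in the domain of $f$) is called a Siegel disk if every sphere $S_\rho(x_0)$ with $\rho<r$ is invariant, i.e. for every $x\in S_\rho(x_0)$ all iterates $f^n(x)$, $n=1,2,\dots$, are defined and lie in $S_\rho(x_0)$. The maximum Siegel disk $SI(x_0)$ is the union of all Siegel disks centered at $x_0$. *)

(* Defs.v *)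
From HB Require Import structures.
From mathcomp Require Import all_boot all_order all_algebra.
From mathcomp Require Import reals.
Set Implicit Arguments. Unset Strict Implicit. Unset Printing Implicit Defensive.
Import Order.TTheory GRing.Theory Num.Theory.
Local Open Scope ring_scope.

(* An abstract model of (C_p, |.|_p): an algebraically closed field K
   (closedFieldType) with a non-archimedean absolute value nrm : K -> R
   normalized by |p| = 1/p, complete w.r.t. nrm. *)
Record Cp_structure (p : nat) (K : closedFieldType) (R : realType)
    (nrm : K -> R) : Prop := {
  Cp_prime : prime p;
  Cp_nrm_ge0 : forall x, 0 <= nrm x;
  Cp_nrm_eq0 : forall x, nrm x = 0 <-> x = 0;
  Cp_nrmM : forall x y, nrm (x * y) = nrm x * nrm y;
  Cp_nrm_ultra : forall x y, nrm (x + y) <= Num.max (nrm x) (nrm y);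
  Cp_nrm_p : nrm (p%:R) = (p%:R)^-1;
  Cp_complete : forall u : nat -> K,
    (forall e : R, 0 < e -> exists N, forall m n, (N <= m)%N -> (N <= n)%N ->
        nrm (u m - u n) < e) ->
    exists l, forall e : R, 0 < e -> exists N, forall n, (N <= n)%N ->
        nrm (u n - l) < e
}.

Section Moebius.
Variables (K : fieldType) (R : realType) (nrm : K -> R).

Definition mob (a b c : K) (x : K) : K := (x + a) / (b * x + c).
Definition mob_pole (b c : K) : K := - c / b.

Definition open_ball (x0 : K) (r : R) : K -> Prop := fun x => nrm (x - x0) < r.
Definition sphere (x0 : K) (rho : R) : K -> Prop := fun x => nrm (x - x0) = rho.

Definition siegel_disk (a b c x0 : K) (r : R) : Prop :=
  0 < r /\
  (forall x, open_ball x0 r x -> x <> mob_pole b c) /\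
  (forall rho : R, 0 <= rho -> rho < r -> forall x, sphere x0 rho x ->
     forall n : nat,
       iter n (mob a b c) x <> mob_pole b c /\
       sphere x0 rho (iter n.+1 (mob a b c) x)).

Definition max_siegel_disk (a b c x0 : K) : K -> Prop :=
  fun x => exists r : R, siegel_disk a b c x0 r /\ open_ball x0 r x.

End Moebius.

(* Main.v *)
Require Import Defs.
From HB Require Import structures.
From mathcomp Require Import all_boot all_order all_algebra.
From mathcomp Require Import reals.
From mathcomp Require Import ring.
Import Order.TTheory GRing.Theory Num.Theory.
Local Open Scope ring_scope.

Section Aux.
Variables (p : nat) (K : closedFieldType) (R : realType) (nrm : K -> R).
Hypothesis HK : Cp_structure p nrm.

Lemma nrm_neq0 {x : K} : x != 0 -> nrm x != 0.
Proof. move=> hx; apply/eqP => /(Cp_nrm_eq0 HK) /eqP; by rewrite (negbTE hx). Qed.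

Lemma nrm_gt0 {x : K} : x != 0 -> 0 < nrm x.
Proof. move=> hx; by rewrite lt0r nrm_neq0 // (Cp_nrm_ge0 HK). Qed.

Lemma nrm1 : nrm 1 = 1.
Proof.
have h := @nrm_neq0 1 (oner_neq0 K).
apply: (mulfI h); by rewrite mulr1 -(Cp_nrmM HK) mulr1.
Qed.

Lemma nrm_sq x y : nrm x ^+ 2 = nrm y ^+ 2 -> nrm x = nrm y.
Proof. move=> /eqP; rewrite eqrXn2 ?(Cp_nrm_ge0 HK) // => /eqP //. Qed.

Lemma nrmN x : nrm (- x) = nrm x.
Proof.
have h1 : nrm (-1) = 1.
  rewrite -nrm1; apply: nrm_sq; by rewrite !expr2 -!(Cp_nrmM HK) mulrNN.
by rewrite -mulN1r (Cp_nrmM HK) h1 mul1r.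
Qed.

Lemma nrmV x : x != 0 -> nrm (x^-1) = (nrm x)^-1.
Proof.
move=> hx; have h := nrm_neq0 hx.
apply: (mulfI h); by rewrite -(Cp_nrmM HK) !divff // nrm1.
Qed.

Lemma nrm_dom y z : nrm y < nrm z -> nrm (y + z) = nrm z.
Proof.
move=> lt; apply/eqP; rewrite eq_le; apply/andP; split.
  have := Cp_nrm_ultra HK y z; rewrite le_max => /orP [h|//].
  exact: (le_trans h (ltW lt)).
rewrite addrC; have := Cp_nrm_ultra HK (z + y) (- y); rewrite addrK nrmN.
rewrite le_max => /orP [//|h]; exfalso; move: (lt_le_trans lt h); by rewrite ltxx.
Qed.

Lemma two_neq0 : (2%:R : K) != 0.
Proof.
apply/negP => /eqP h2.
have hp := Cp_prime HK.
have hpR : (p%:R : K) = (p %% 2)%:R.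
  by rewrite {1}(divn_eq p 2) natrD natrM h2 mulr0 add0r.
have := Cp_nrm_p HK; rewrite hpR.
have : (p %% 2 < 2)%N by rewrite ltn_mod.
case: (p %% 2)%N => [|[|//]] _.
  rewrite (proj2 (Cp_nrm_eq0 HK 0)) // => /esym /eqP; rewrite invr_eq0 pnatr_eq0.
  by move: hp; case: p.
rewrite nrm1 => /esym /eqP; rewrite invr_eq1 pnatr_eq1 => /eqP hp1.
by move: hp; rewrite hp1.
Qed.

Variables (a b c s : K).
Hypotheses (hb : b != 0) (hc : c != a * b) (hs : s ^+ 2 = c - a * b).

Lemma gen_main (x0 : K) : b * x0 + c != 0 -> mob a b c x0 = x0 ->
  nrm (c - a * b) = nrm (b * x0 + c) ^+ 2 ->
  forall x, max_siegel_disk nrm a b c x0 x <-> open_ball nrm x0 (nrm (s / b)) x.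
Proof.
move=> hu hfix hn.
have hs0 : s != 0.
  apply/eqP => e; move: hs; rewrite e expr0n /= => /eqP; rewrite eq_sym subr_eq0.
  by rewrite (negbTE hc).
have hN : nrm (b * x0 + c) = nrm s.
  by apply: nrm_sq; rewrite -hn expr2 -(Cp_nrmM HK) -expr2 hs.
have hr : nrm (s / b) = nrm s / nrm b by rewrite (Cp_nrmM HK) nrmV.
have nb := nrm_gt0 hb.
have key : forall x, nrm (x - x0) < nrm (s / b) ->
    b * x + c != 0 /\ nrm (mob a b c x - x0) = nrm (x - x0).
  move=> x hx.
  have e1 : b * x + c = b * (x - x0) + (b * x0 + c) by ring.
  have hlt : nrm (b * (x - x0)) < nrm (b * x0 + c).
    by rewrite (Cp_nrmM HK) hN mulrC -ltr_pdivlMr // -hr.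
  have e2 : nrm (b * x + c) = nrm s by rewrite e1 nrm_dom // hN.
  have hv : b * x + c != 0.
    apply/eqP => e; move: e2; rewrite e (proj2 (Cp_nrm_eq0 HK 0)) // => /esym /eqP.
    by rewrite (negbTE (nrm_neq0 hs0)).
  split => //.
  have e3 : mob a b c x - x0 = (c - a * b) * (x - x0) / ((b * x + c) * (b * x0 + c)).
    rewrite -{1}hfix /mob; by field; apply/andP.
  rewrite e3 (Cp_nrmM HK) nrmV ?mulf_neq0 // !(Cp_nrmM HK) e2 hN hn hN.
  by field; rewrite nrm_neq0.
have hpole : nrm (mob_pole b c - x0) = nrm (s / b).
  have -> : mob_pole b c - x0 = - ((b * x0 + c) / b) by rewrite /mob_pole; field.
  by rewrite nrmN hr (Cp_nrmM HK) nrmV // hN.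
move=> x; split.
  move=> [r [[r0 [hdom _]] hx]].
  rewrite /open_ball; apply: (lt_le_trans hx).
  rewrite leNgt; apply/negP => hlt.
  apply: (hdom (mob_pole b c)) => //. rewrite /open_ball /=. by rewrite hpole.
move=> hx; exists (nrm (s / b)); split => //.
split; first by rewrite hr divr_gt0 // nrm_gt0.
split.
  move=> y /key [hv _] e; move: hv; by rewrite e /mob_pole mulrC divfK // addNr eqxx.
move=> rho _ hrho y hy.
have IH : forall n, sphere nrm x0 rho (iter n (mob a b c) y).
  elim => [//|n IHn]; rewrite iterS /sphere.
  move: IHn; rewrite /sphere => e; rewrite (proj2 (key _ _)) //; by rewrite e.
move=> n; split; last exact: IH.
move=> e; have := IH n; rewrite /sphere e hpole => er; move: hrho; by rewrite er ltxx.
Qed.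

End Aux.

Theorem theorem3p2 (p : nat) (K : closedFieldType) (R : realType)
  (nrm : K -> R) (HK : Cp_structure p nrm)
  (a b c : K) (hb : b != 0) (hc : c != a * b)
  (d : K) (hd : d ^+ 2 = (c - 1) ^+ 2 + 4%:R * a * b)
  (s : K) (hs : s ^+ 2 = c - a * b) :
  let x1 := (1 - c + d) / (2%:R * b) in
  let x2 := (1 - c - d) / (2%:R * b) in
  nrm ((c - a * b) / (b * x1 + c) ^+ 2) = 1 ->
  nrm ((c - a * b) / (b * x2 + c) ^+ 2) = 1 ->
  nrm (b / s) < 1 ->
  let eps_c := nrm (s / b) - 1 in
  forall x : K,
    (max_siegel_disk nrm a b c x1 x <-> open_ball nrm x1 (1 + eps_c) x) /\
    (max_siegel_disk nrm a b c x2 x <-> open_ball nrm x2 (1 + eps_c) x).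
Proof.
move=> x1 x2 h1 h2 _ eps_c x.
have h2n := @two_neq0 p K R nrm HK.
have nrmV' := @nrmV p K R nrm HK.
have nrm_neq0' := @nrm_neq0 p K R nrm HK.
have -> : 1 + eps_c = nrm (s / b) by rewrite /eps_c addrC subrK.
have prep : forall y, nrm ((c - a * b) / (b * y + c) ^+ 2) = 1 ->
    b * y + c != 0 /\ nrm (c - a * b) = nrm (b * y + c) ^+ 2.
  move=> y hy.
  have hu : b * y + c != 0.
    apply/eqP => e; move: hy; rewrite e expr0n /= invr0 mulr0.
    rewrite (proj2 (Cp_nrm_eq0 HK 0)) // => /eqP; by rewrite eq_sym oner_eq0.
  split => //.
  move: hy; rewrite (Cp_nrmM HK) nrmV' ?expf_neq0 // => hy.
  have hM : nrm ((b * y + c) ^+ 2) != 0 by rewrite nrm_neq0' ?expf_neq0.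
  have := divfK hM (nrm (c - a * b)); rewrite hy mul1r => <-.
  by rewrite expr2 (Cp_nrmM HK) expr2.
have fixp : forall y, b * y + c != 0 -> y * (b * y + c) - (y + a) = 0 ->
    mob a b c y = y.
  move=> y hu e; rewrite /mob; move/eqP: e; rewrite subr_eq0 => /eqP <-.
  by rewrite mulfK.
have [hu1 hn1] := prep _ h1; have [hu2 hn2] := prep _ h2.
split; apply: (@gen_main p K R nrm HK a b c s hb hc hs) => //; apply: fixp => //.
- have -> : x1 * (b * x1 + c) - (x1 + a) = (d ^+ 2 - ((c - 1) ^+ 2 + 4%:R * a * b)) / (4%:R * b).
    rewrite /x1; field; apply/andP; split => //.
    by rewrite (_ : 4%:R = 2%:R * 2%:R :> K) ?mulf_neq0 // -natrM.
  by rewrite hd subrr mul0r.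
- have -> : x2 * (b * x2 + c) - (x2 + a) = (d ^+ 2 - ((c - 1) ^+ 2 + 4%:R * a * b)) / (4%:R * b).
    rewrite /x2; field; apply/andP; split => //.
    by rewrite (_ : 4%:R = 2%:R * 2%:R :> K) ?mulf_neq0 // -natrM.
  by rewrite hd subrr mul0r.
Qed.
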